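(* Let $n,k,d\in\mathbb{N}$, let $a_{1:n}\in(\{0,1\}^d)^n$ be arbitrary, let $h^*\in\mathcal{C}^k_d$, and let $x_t:=h^*(a_t)$ for $t=1,\dots,n$. Then $\mathcal{L}_n(\textsc{Alg1}^k_d)\le 2^{2k+1}d^{2k}$ and $\mathcal{L}_n(\textsc{Alg2}^k_d)\le(2^kd^k+1)\log_2(n+1)$.
   Context: Literals over variables $x_1,\dots,x_d$ are elements of $\{x_1,\dots,x_d,\neg x_1,\dots,\neg x_d\}$. $\mathcal{C}^k_d$ is the class of $k$-CNF Boolean functions on $\{0,1\}^d$: conjunctions $c_1\wedge\dots\wedge c_m$ ($m\ge0$) where each clause $c_y$ is a disjunction of $k$ literals. Let $D:=(2d)^k$ and index the $D$ ordered $k$-tuples $(\ell_1,\dots,\ell_k)$ of literals by $j=1,\dots,D$; the map $\phi:\{0,1\}^d\to\{0,1\}^D$ sends $a$ to the vector whose $j$-th component is $\ell_1(a)\vee\dots\vee\ell_k(a)$ for the $j$-th tuple. For $\mathcal{S}\subseteq\{1,\dots,D\}$, $h_{\mathcal{S}}(c)=\bigwedge_{j\in\mathcal{S}}c^j$. Predictor $\zeta_D$ (dimension $D$, $\alpha=2^{-D/2^D}$): at time $t$, with $\mathcal{A}_t=\{c_\tau:\tau<t,x_\tau=0\}$ and $w_j=\prod_{\tau<t:x_\tau=1}c_\tau^j$ (1 if empty), it predicts $0$ with probability $1$ if $c_t\in\mathcal{A}_t$ and otherwise predicts $1$ with probability $\prod_{j=1}^D\frac{(1-\alpha)+\alpha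 w_jc_t^j}{(1-\alpha)+\alpha w_j}$. Predictor $\pi_D$: with $\mathcal{D}_t=\{j: c_\tau^j=1\ \forall\tau<t\text{ with }x_\tau=1\}$ and $y_t=\bigwedge_{j\in\mathcal{D}_t}c_t^j$, it assigns probability $\frac{t}{t+1}$ to $y_t$ and $\frac1{t+1}$ to $1-y_t$. $\textsc{Alg1}^k_d$ (resp. $\textsc{Alg2}^k_d$) is the predictor obtained by running $\zeta_D$ (resp. $\pi_D$) on the transformed side information $c_t:=\phi(a_t)$ with labels $x_t$. The cumulative log-loss of a predictor $\rho$ is $\mathcal{L}_n(\rho)=-\log_2\prod_{t=1}^n\rho(x_t\mid x_{<t};a_{1:t})$. *)

(* Defs.v *)
From Stdlib Require Import Reals List Bool Arith.
Import ListNotations.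
Open Scope R_scope.

(* Boolean assignment a in {0,1}^d : variable i (0 <= i < d) has value a i. *)
Definition assignment := nat -> bool.

(* Literal (i, true) = x_i ; (i, false) = not x_i. *)
Definition literal := (nat * bool)%type.

Definition eval_lit (a : assignment) (l : literal) : bool :=
  if snd l then a (fst l) else negb (a (fst l)).

(* All 2d literals over x_1..x_d (variables indexed 0..d-1). *)
Definition lits (d : nat) : list literal :=
  flat_map (fun i => [(i, true); (i, false)]) (seq 0 d).

Fixpoint ktuples {A : Type} (k : nat) (l : list A) : list (list A) :=
  match k with
  | O => [ [] ]
  | S k' => flat_map (fun x => map (cons x) (ktuples k' l)) l
  end.

Definition eval_clause (a : assignment) (c : list literal) : bool :=
  existsb (eval_lit a) c.

Definition eval_cnf (h : list (list literal)) (a : assignment) : bool :=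
  forallb (eval_clause a) h.

Definition is_kCNF (k d : nat) (h : list (list literal)) : Prop :=
  forall c, In c h -> length c = k /\ forall l, In l c -> (fst l < d)%nat.

Definition Dim (k d : nat) : nat := ((2 * d) ^ k)%nat.

Definition phi (k d : nat) (a : assignment) : list bool :=
  map (eval_clause a) (ktuples k (lits d)).

Definition comp (c : list bool) (j : nat) : bool := nth j c false.

Definition b2R (b : bool) : R := if b then 1 else 0.

Definition prodR (l : list nat) (f : nat -> R) : R :=
  fold_right Rmult 1 (map f l).

Definition log2 (x : R) : R := ln x / ln 2.

Definition alpha (D : nat) : R := Rpower 2 (- INR D / 2 ^ D).

(* c t : side information (in {0,1}^D), x t : label, times t = 1,2,... *)
Definition zeta_w (D : nat) (c : nat -> list bool) (x : nat -> bool)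
  (t j : nat) : R :=
  prodR (filter (fun tau => x tau) (seq 1 (t - 1))) (fun tau => b2R (comp (c tau) j)).

Definition zeta_inA (c : nat -> list bool) (x : nat -> bool) (t : nat) : bool :=
  existsb (fun tau => negb (x tau) && (if list_eq_dec bool_dec (c tau) (c t) then true else false))
          (seq 1 (t - 1)).

Definition zeta_p1 (D : nat) (c : nat -> list bool) (x : nat -> bool) (t : nat) : R :=
  let al := alpha D in
  prodR (seq 0 D) (fun j =>
    ((1 - al) + al * zeta_w D c x t j * b2R (comp (c t) j)) /
    ((1 - al) + al * zeta_w D c x t j)).

Definition zeta_prob (D : nat) (c : nat -> list bool) (x : nat -> bool) (t : nat) : R :=
  if zeta_inA c x t then (if x t then 0 else 1)
  else (if x t then zeta_p1 D c x t else 1 - zeta_p1 D c x t).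

Definition pi_Dset (D : nat) (c : nat -> list bool) (x : nat -> bool) (t : nat) : list nat :=
  filter (fun j => forallb (fun tau => negb (x tau) || comp (c tau) j) (seq 1 (t - 1)))
         (seq 0 D).

Definition pi_y (D : nat) (c : nat -> list bool) (x : nat -> bool) (t : nat) : bool :=
  forallb (fun j => comp (c t) j) (pi_Dset D c x t).

Definition pi_prob (D : nat) (c : nat -> list bool) (x : nat -> bool) (t : nat) : R :=
  if Bool.eqb (x t) (pi_y D c x t) then INR t / (INR t + 1) else 1 / (INR t + 1).

Definition seq_prob (rho : nat -> R) (n : nat) : R := prodR (seq 1 n) rho.

Definition logloss (rho : nat -> R) (n : nat) : R := - log2 (seq_prob rho n).

Definition Alg1_prob (k d : nat) (a : nat -> assignment) (x : nat -> bool) (t : nat) : R :=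
  zeta_prob (Dim k d) (fun s => phi k d (a s)) x t.

Definition Alg2_prob (k d : nat) (a : nat -> assignment) (x : nat -> bool) (t : nat) : R :=
  pi_prob (Dim k d) (fun s => phi k d (a s)) x t.

(* Main.v *)
Require Import Defs.
From Stdlib Require Import Reals List Bool Arith Lia Lra.
Import ListNotations.
Open Scope R_scope.

Lemma prodR_app l1 l2 f : prodR (l1 ++ l2) f = prodR l1 f * prodR l2 f.
Proof. unfold prodR. induction l1; simpl; [ring| rewrite IHl1; ring]. Qed.

Lemma prodR_ext l f g : (forall z, In z l -> f z = g z) -> prodR l f = prodR l g.
Proof. unfold prodR. induction l; simpl; intros H; auto.
  rewrite H by auto. rewrite IHl; auto. Qed.

Lemma seq_prob_S rho n : seq_prob rho (S n) = seq_prob rho n * rho (S n).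
Proof. unfold seq_prob. rewrite seq_S, prodR_app. unfold prodR at 3. simpl.
  replace (1 + n)%nat with (S n) by lia. unfold prodR; simpl; ring. Qed.

Lemma ln_le' x y : 0 < x -> x <= y -> ln x <= ln y.
Proof. intros Hx Hxy. destruct (Rle_lt_or_eq_dec _ _ Hxy) as [H|H].
  left; apply ln_increasing; auto. subst; lra. Qed.

Lemma pow_decr (q : R) (m n : nat) : 0 <= q <= 1 -> (m <= n)%nat -> q ^ n <= q ^ m.
Proof. intros Hq Hmn. replace n with (m + (n - m))%nat by lia. rewrite pow_add.
  assert (q ^ (n - m) <= 1). { induction (n - m)%nat; simpl; [lra|].
    replace 1 with (1*1) by ring. apply Rmult_le_compat; try lra; auto. apply pow_le; lra. }
  assert (0 <= q ^ m) by (apply pow_le; lra). nra. Qed.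

Lemma filter_len_split {A} (P q : A -> bool) l :
  length (filter P l) = (length (filter (fun z => P z && q z) l) + length (filter (fun z => P z && negb (q z)) l))%nat.
Proof. induction l; simpl; auto. destruct (P a), (q a); simpl; lia. Qed.

Lemma filter_len_le {A} (P : A -> bool) l : (length (filter P l) <= length l)%nat.
Proof. induction l; simpl; auto. destruct (P a); simpl; lia. Qed.

Lemma forallb_false_ex {A} (f : A -> bool) l : forallb f l = false -> exists z, In z l /\ f z = false.
Proof. induction l; simpl; try discriminate. destruct (f a) eqn:E; simpl; intros H.
  destruct (IHl H) as [z [? ?]]; eauto. eauto. Qed.

Lemma length_flat_map_const {A B} (f : A -> list B) m l :
  (forall z, length (f z) = m) -> length (flat_map f l) = (m * length l)%nat.
Proof. intros H; induction l; simpl; [lia|]. rewrite length_app, H, IHl. lia. Qed.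

Lemma length_ktuples {A} k (l : list A) : length (ktuples k l) = (length l ^ k)%nat.
Proof. induction k; simpl; auto. rewrite (length_flat_map_const _ (length l ^ k)).
  lia. intros z; rewrite length_map; auto. Qed.

Lemma In_ktuples {A} k (l : list A) cl : length cl = k -> (forall z, In z cl -> In z l) -> In cl (ktuples k l).
Proof. revert cl; induction k; intros cl Hl Hin; destruct cl; simpl in *; try discriminate; auto.
  apply in_flat_map. exists a. split; auto. apply in_map. apply IHk; auto. Qed.

Lemma length_lits d : length (lits d) = (2 * d)%nat.
Proof. unfold lits. rewrite (length_flat_map_const _ 2). rewrite length_seq; auto. reflexivity. Qed.

Lemma In_lits d (l : literal) : (fst l < d)%nat -> In l (lits d).
Proof. destruct l as [i b]; simpl; intros H. unfold lits. apply in_flat_map. exists i.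
  split. apply in_seq; lia. destruct b; simpl; auto. Qed.

Lemma length_phi k d a : length (phi k d a) = Dim k d.
Proof. unfold phi, Dim. rewrite length_map, length_ktuples, length_lits; auto. Qed.

Lemma S_exists k d (h : list (list literal)) : is_kCNF k d h ->
  exists Sl, (forall j, In j Sl -> (j < Dim k d)%nat) /\
   forall a, eval_cnf h a = forallb (fun j => Defs.comp (phi k d a) j) Sl.
Proof. unfold is_kCNF, eval_cnf. induction h as [|cl h IH]; intros H.
  - exists []; simpl; split; auto. tauto.
  - destruct IH as [Sl [HS1 HS2]]. { intros c Hc; apply H; simpl; auto. }
    destruct (H cl (or_introl eq_refl)) as [Hlen Hlit].
    assert (Hin : In cl (ktuples k (lits d))) by (apply In_ktuples; auto; intros; apply In_lits; auto).
    destruct (In_nth _ _ (@nil literal) Hin) as [j [Hj Hnth]].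
    exists (j :: Sl). split.
    + intros j' [<-|Hj']; auto. rewrite length_ktuples, length_lits in Hj; unfold Dim; lia.
    + intros a. simpl. rewrite HS2. f_equal. unfold Defs.comp, phi.
      rewrite (nth_indep _ false (eval_clause a (@nil literal))) by (rewrite length_map; auto).
      rewrite map_nth, Hnth; auto.
Qed.

Definition Pr (c : nat -> list bool) (x : nat -> bool) t j :=
  forallb (fun tau => negb (x tau) || Defs.comp (c tau) j) (seq 1 (t - 1)).

Lemma Dset_eq D c x t : pi_Dset D c x t = filter (Pr c x t) (seq 0 D).
Proof. reflexivity. Qed.

Lemma Pr_S c x n j : Pr c x (S (S n)) j = Pr c x (S n) j && (negb (x (S n)) || Defs.comp (c (S n)) j).
Proof. unfold Pr. replace (S (S n) - 1)%nat with (S n) by lia. replace (S n - 1)%nat with n by lia.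
  rewrite seq_S, forallb_app. simpl. rewrite andb_true_r. replace (1 + n)%nat with (S n) by lia. auto. Qed.

Lemma Dset_S_neg D c x n : x (S n) = false -> pi_Dset D c x (S (S n)) = pi_Dset D c x (S n).
Proof. intros H. rewrite !Dset_eq. apply filter_ext. intros j. rewrite Pr_S, H. simpl.
  apply andb_true_r. Qed.

Lemma Dset_S_pos D c x n : x (S n) = true -> pi_Dset D c x (S (S n)) =
  filter (fun j => Pr c x (S n) j && Defs.comp (c (S n)) j) (seq 0 D).
Proof. intros H. rewrite !Dset_eq. apply filter_ext. intros j. rewrite Pr_S, H. reflexivity. Qed.

Lemma Dset_len D c x t : (length (pi_Dset D c x t) <= D)%nat.
Proof. rewrite Dset_eq. etransitivity. apply filter_len_le. rewrite length_seq; lia. Qed.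

Lemma Dset_1 D c x : length (pi_Dset D c x 1) = D.
Proof. rewrite Dset_eq. unfold Pr. simpl. rewrite <- (length_seq D 0) at 2.
  induction (seq 0 D); simpl; auto. Qed.

Section Abs.
Variables (D : nat) (c : nat -> list bool) (x : nat -> bool) (Sl : list nat).
Hypothesis HS : forall j, In j Sl -> (j < D)%nat.
Hypothesis Hx : forall t, x t = forallb (fun j => Defs.comp (c t) j) Sl.

Lemma S_in_D j t : In j Sl -> Pr c x t j = true /\ In j (pi_Dset D c x t).
Proof. intros Hj. assert (HP : Pr c x t j = true).
  { unfold Pr. apply forallb_forall. intros tau _. destruct (x tau) eqn:E; simpl; auto.
    rewrite Hx in E. rewrite forallb_forall in E. auto. }
  split; auto. rewrite Dset_eq. apply filter_In. split; auto. apply in_seq. specialize (HS j Hj); lia. Qed.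

Lemma neg_witness t : x t = false -> exists j, In j Sl /\ Defs.comp (c t) j = false.
Proof. rewrite Hx. apply forallb_false_ex. Qed.

Lemma y_le_x t : pi_y D c x t = true -> x t = true.
Proof. unfold pi_y. rewrite forallb_forall. intros H. rewrite Hx. apply forallb_forall.
  intros j Hj. apply H. apply S_in_D; auto. Qed.

Definition epi n := (1 + D - length (pi_Dset D c x (S n)))%nat.

Lemma step_correct a e e' : 0 < a -> (1 <= e)%nat -> (e <= e')%nat ->
  (/(a+1))^e' <= (/a)^e * (a/(a+1)).
Proof. intros Ha H1 H2.
  assert (Hq : 0 <= / (a + 1) <= 1). { split. left; apply Rinv_0_lt_compat; lra.
       rewrite <- Rinv_1. apply Rinv_le_contravar; lra. }
  apply Rle_trans with ((/(a+1))^e). apply pow_decr; auto.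
  replace e with (S (e - 1)) by lia. simpl.
  replace ((/a) * (/a)^(e-1) * (a/(a+1))) with ((/a)^(e-1) * / (a+1)) by (field; lra).
  rewrite Rmult_comm. apply Rmult_le_compat_r. lra. apply pow_incr. split. lra.
  apply Rinv_le_contravar; lra. Qed.

Lemma step_wrong a e e' : 0 < a -> (S e <= e')%nat ->
  (/(a+1))^e' <= (/a)^e * (1/(a+1)).
Proof. intros Ha H2.
  assert (Hq : 0 <= / (a + 1) <= 1). { split. left; apply Rinv_0_lt_compat; lra.
       rewrite <- Rinv_1. apply Rinv_le_contravar; lra. }
  apply Rle_trans with ((/(a+1))^(S e)). apply pow_decr; auto.
  simpl. rewrite Rmult_comm. unfold Rdiv. rewrite Rmult_1_l. apply Rmult_le_compat_r. lra. apply pow_incr. split. lra.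
  apply Rinv_le_contravar; lra. Qed.

Lemma pi_step n : seq_prob (pi_prob D c x) n >= (/ (INR n + 1)) ^ epi n.
Proof. induction n.
  - unfold seq_prob, epi. rewrite Dset_1. replace (1 + D - D)%nat with 1%nat by lia. simpl. unfold prodR. simpl. lra.
  - rewrite seq_prob_S. set (a := INR n + 1) in *. assert (Ha : 0 < a) by (unfold a; pose proof (pos_INR n); lra).
    replace (INR (S n) + 1) with (a + 1) by (unfold a; rewrite S_INR; ring).
    pose proof (Dset_len D c x (S n)) as Hl.
    assert (He1 : (1 <= epi n)%nat) by (unfold epi; lia).
    assert (Hrho : 0 <= pi_prob D c x (S n)).
    { unfold pi_prob. destruct (Bool.eqb _ _); apply Rle_mult_inv_pos; try apply pos_INR; pose proof (pos_INR (S n)); lra. }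
    apply Rle_ge. eapply Rle_trans; [| apply Rmult_le_compat_r; [exact Hrho | apply Rge_le; exact IHn]].
    unfold pi_prob. replace (INR (S n)) with a by (unfold a; rewrite S_INR; ring).
    destruct (Bool.eqb (x (S n)) (pi_y D c x (S n))) eqn:E.
    +
      apply step_correct; auto.
      unfold epi. destruct (x (S n)) eqn:Ex.
        * rewrite (Dset_S_pos D c x n Ex). rewrite Dset_eq. rewrite (filter_len_split (Pr c x (S n)) (Defs.comp (c (S n)))). lia.
        * rewrite (Dset_S_neg D c x n Ex). lia.
    + apply step_wrong; auto.
      destruct (x (S n)) eqn:Ex.
      * destruct (pi_y D c x (S n)) eqn:Ey; try discriminate.
        unfold pi_y in Ey. apply forallb_false_ex in Ey. destruct Ey as [j [Hj Hj2]].
        rewrite Dset_eq in Hj. apply filter_In in Hj. destruct Hj as [Hj1 Hj3].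
        unfold epi. rewrite (Dset_S_pos D c x n Ex). rewrite Dset_eq.
        rewrite (filter_len_split (Pr c x (S n)) (Defs.comp (c (S n)))).
        assert (length (filter (fun z => Pr c x (S n) z && negb (Defs.comp (c (S n)) z)) (seq 0 D)) <> 0%nat).
        { intros H0. apply length_zero_iff_nil in H0.
          assert (In j (filter (fun z => Pr c x (S n) z && negb (Defs.comp (c (S n)) z)) (seq 0 D))).
          { apply filter_In. rewrite Hj3, Hj2. auto. }
          rewrite H0 in H. inversion H. }
        rewrite Dset_eq, (filter_len_split (Pr c x (S n)) (Defs.comp (c (S n)))) in Hl. lia.
      * destruct (pi_y D c x (S n)) eqn:Ey; try discriminate.
        apply y_le_x in Ey. congruence.
Qed.

Lemma pi_final n : (0 < seq_prob (pi_prob D c x) n) /\ (logloss (pi_prob D c x) n <= (INR D + 1) * log2 (INR n + 1)).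
Proof.
  pose proof (pi_step n) as H. set (q := / (INR n + 1)) in *.
  pose proof (pos_INR n) as Hpn. assert (Hn : 0 < INR n + 1) by lra.
  assert (Hq : 0 < q <= 1). { unfold q. split. apply Rinv_0_lt_compat; lra.
       rewrite <- Rinv_1. apply Rinv_le_contravar; lra. }
  assert (He : (epi n <= S D)%nat) by (unfold epi; lia).
  assert (Hb : q ^ (S D) <= q ^ epi n) by (apply pow_decr; auto; lra).
  assert (Hp : 0 < q ^ (S D)) by (apply pow_lt; lra).
  split. lra.
  unfold logloss, log2. assert (Hl2 : 0 < ln 2) by (pose proof ln_lt_2; lra).
  assert (H0 : ln (q ^ S D) <= ln (seq_prob (pi_prob D c x) n)) by (apply ln_le'; lra).
  rewrite ln_pow in H0 by lra. unfold q in H0. rewrite ln_Rinv in H0 by lra.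
  rewrite S_INR in H0.
  apply Rmult_le_reg_r with (ln 2); auto. unfold Rdiv. 
  replace ((INR D + 1) * (ln (INR n + 1) * / ln 2) * ln 2) with ((INR D + 1) * ln (INR n + 1)) by (field; lra).
  replace (- (ln (seq_prob (pi_prob D c x) n) * / ln 2) * ln 2) with (- ln (seq_prob (pi_prob D c x) n)) by (field; lra).
  lra.
Qed.
End Abs.

Lemma zeta_w_eq D c x t j : zeta_w D c x t j = b2R (Pr c x t j).
Proof. unfold zeta_w, Pr. induction (seq 1 (t - 1)) as [|a l IH]; simpl; [reflexivity|].
  destruct (x a); simpl.
  - unfold prodR in *. simpl. rewrite IH. destruct (Defs.comp (c a) j); simpl; ring.
  - exact IH. Qed.

Lemma p1_gen (al : R) (P q : nat -> bool) l : (l <> [] -> 1 - al <> 0) ->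
  prodR l (fun j => ((1 - al) + al * b2R (P j) * b2R (q j)) / ((1 - al) + al * b2R (P j))) =
  (1 - al) ^ (length (filter (fun j => P j && negb (q j)) l)).
Proof. intros H. induction l as [|a l IH]; [reflexivity|].
  assert (H1 : 1 - al <> 0) by (apply H; discriminate).
  assert (IH' : prodR l (fun j => ((1 - al) + al * b2R (P j) * b2R (q j)) / ((1 - al) + al * b2R (P j))) =
  (1 - al) ^ (length (filter (fun j => P j && negb (q j)) l))) by (apply IH; auto).
  unfold prodR in *. simpl. rewrite IH'.
  destruct (P a), (q a); simpl; field; auto; try (intro; lra). Qed.

Lemma p1_eq D c x t : ((1 <= D)%nat -> alpha D < 1) ->
  zeta_p1 D c x t = (1 - alpha D) ^ (length (filter (fun j => Pr c x t j && negb (Defs.comp (c t) j)) (seq 0 D))).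
Proof. intros Hal. unfold zeta_p1.
  rewrite (prodR_ext _ _ (fun j => ((1 - alpha D) + alpha D * b2R (Pr c x t j) * b2R (Defs.comp (c t) j)) / ((1 - alpha D) + alpha D * b2R (Pr c x t j)))).
  apply p1_gen. intros Hne. destruct D. simpl in Hne. congruence. specialize (Hal ltac:(lia)). lra.
  intros z _. rewrite zeta_w_eq. reflexivity. Qed.

Fixpoint negset (c : nat -> list bool) (x : nat -> bool) (n : nat) : list (list bool) :=
  match n with
  | O => []
  | S m => let s := negset c x m in
     if x (S m) then s else if in_dec (list_eq_dec bool_dec) (c (S m)) s then s else c (S m) :: s
  end.

Lemma negset_mono c x n : (length (negset c x n) <= length (negset c x (S n)))%nat.
Proof. simpl. destruct (x (S n)); auto. destruct (in_dec _ _ _); simpl; lia. Qed.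

Lemma negset_in c x n v : In v (negset c x n) -> exists tau, (1 <= tau <= n)%nat /\ x tau = false /\ c tau = v.
Proof. induction n; simpl; [tauto|]. intros H.
  destruct (x (S n)) eqn:E.
  - destruct (IHn H) as [tau [? ?]]. exists tau; split; auto; lia.
  - destruct (in_dec _ _ _).
    + destruct (IHn H) as [tau [? ?]]. exists tau; split; auto; lia.
    + destruct H as [<-|H]. exists (S n); split; auto; lia.
      destruct (IHn H) as [tau [? ?]]. exists tau; split; auto; lia. Qed.

Lemma negset_nodup c x n : NoDup (negset c x n).
Proof. induction n; simpl. constructor. destruct (x (S n)); auto.
  destruct (in_dec _ _ _); auto. constructor; auto. Qed.

Lemma inA_of_in c x n : In (c (S n)) (negset c x n) -> zeta_inA c x (S n) = true.
Proof. intros H. destruct (negset_in _ _ _ _ H) as [tau [Ht [Hx Hc]]].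
  unfold zeta_inA. apply existsb_exists. exists tau. split. apply in_seq; lia.
  rewrite Hx, Hc. simpl. destruct (list_eq_dec bool_dec _ _); auto. Qed.

Lemma count_bound D (l : list (list bool)) : NoDup l -> (forall v, In v l -> length v = D) -> (length l <= 2 ^ D)%nat.
Proof. intros Hn Hl. replace (2 ^ D)%nat with (length (ktuples D [true; false])) by (rewrite length_ktuples; reflexivity).
  apply NoDup_incl_length; auto. intros v Hv. apply In_ktuples; auto. intros [|] _; simpl; auto. Qed.

Section Zeta.
Variables (D : nat) (c : nat -> list bool) (x : nat -> bool) (Sl : list nat).
Hypothesis HS : forall j, In j Sl -> (j < D)%nat.
Hypothesis Hx : forall t, x t = forallb (fun j => Defs.comp (c t) j) Sl.
Hypothesis Hal : 0 < alpha D <= 1.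
Hypothesis Hal1 : (1 <= D)%nat -> alpha D < 1.


Definition Qz n := (alpha D) ^ (length (negset c x n)) * (1 - (alpha D)) ^ (D - length (pi_Dset D c x (S n))).

Lemma inA_neg n : zeta_inA c x (S n) = true -> x (S n) = false.
Proof. unfold zeta_inA. intros H. apply existsb_exists in H. destruct H as [tau [_ H]].
  destruct (x tau) eqn:E; try discriminate. simpl in H.
  destruct (list_eq_dec bool_dec (c tau) (c (S n))) as [Hc|]; try discriminate.
  rewrite Hx, <- Hc, <- Hx. auto. Qed.

Lemma Qz_nonneg n : 0 <= Qz n.
Proof. unfold Qz. apply Rmult_le_pos; apply pow_le; lra. Qed.

Lemma zeta_step n : seq_prob (zeta_prob D c x) n >= Qz n.
Proof. induction n.
  - unfold seq_prob, Qz. rewrite Dset_1. replace (D - D)%nat with 0%nat by lia. unfold prodR. simpl. lra.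
  - rewrite seq_prob_S.
    assert (Key : 0 <= zeta_prob D c x (S n) /\ Qz (S n) <= Qz n * zeta_prob D c x (S n)).
    { unfold zeta_prob. pose proof (Dset_len D c x (S n)) as Hl.
      destruct (zeta_inA c x (S n)) eqn:EA.
      - pose proof (inA_neg n EA) as Ex. rewrite Ex. split. lra. rewrite Rmult_1_r.
        unfold Qz. rewrite (Dset_S_neg D c x n Ex). apply Rmult_le_compat_r. apply pow_le; lra.
        apply pow_decr. lra. apply negset_mono.
      - rewrite p1_eq by auto. 
        set (m := length (filter (fun j => Pr c x (S n) j && negb (Defs.comp (c (S n)) j)) (seq 0 D))).
        destruct (x (S n)) eqn:Ex.
        + split. apply pow_le; lra.
          unfold Qz. rewrite (Dset_S_pos D c x n Ex). simpl negset. rewrite Ex.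
          rewrite Dset_eq in Hl |- *. rewrite (filter_len_split (Pr c x (S n)) (Defs.comp (c (S n)))) in Hl |- *.
          fold m. fold m in Hl.
          replace (D - length (filter (fun z => Pr c x (S n) z && Defs.comp (c (S n)) z) (seq 0 D)))%nat
            with ((D - (length (filter (fun z => Pr c x (S n) z && Defs.comp (c (S n)) z) (seq 0 D)) + m)) + m)%nat by lia.
          rewrite pow_add. right; ring.
        + destruct (neg_witness c x Sl Hx (S n) Ex) as [j [Hj Hcj]].
          destruct (S_in_D D c x Sl HS Hx j (S n) Hj) as [HP HjD].
          assert (Hm : (1 <= m)%nat).
          { unfold m. destruct (filter _ (seq 0 D)) eqn:EF; simpl; [|lia].
            assert (In j (filter (fun j => Pr c x (S n) j && negb (Defs.comp (c (S n)) j)) (seq 0 D))).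
            { apply filter_In. rewrite HP, Hcj. split; auto. apply in_seq. specialize (HS j Hj). lia. }
            rewrite EF in H. inversion H. }
          assert (HD : (1 <= D)%nat) by (specialize (HS j Hj); lia).
          specialize (Hal1 HD). 
          assert (Hp : (1 - (alpha D)) ^ m <= (1 - (alpha D)) ^ 1) by (apply pow_decr; auto; lra).
          simpl in Hp. rewrite Rmult_1_r in Hp.
          split. lra.
          unfold Qz. rewrite (Dset_S_neg D c x n Ex). simpl negset. rewrite Ex.
          destruct (in_dec (list_eq_dec bool_dec) (c (S n)) (negset c x n)) as [Hin|Hin].
          { apply inA_of_in in Hin. congruence. }
          simpl length. simpl pow.
          assert (0 <= (alpha D) ^ length (negset c x n) * (1 - (alpha D)) ^ (D - length (pi_Dset D c x (S n)))).
          { apply Rmult_le_pos; apply pow_le; lra. }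
          nra. }
    destruct Key as [K1 K2]. apply Rle_ge. eapply Rle_trans. exact K2.
    apply Rmult_le_compat_r; auto. lra.
Qed.

Lemma zeta_final n (Hc : forall t, length (c t) = D) :
  seq_prob (zeta_prob D c x) n >= alpha D ^ (length (negset c x n)) * (1 - alpha D) ^ (D - length (pi_Dset D c x (S n))) /\
  (length (negset c x n) <= 2 ^ D)%nat /\ (D - length (pi_Dset D c x (S n)) <= D)%nat /\
  (Sl = [] -> length (negset c x n) = 0%nat) /\
  (D = 1%nat -> Sl <> [] -> (D - length (pi_Dset D c x (S n)) = 0)%nat).
Proof. split; [apply zeta_step|]. split.
  { apply count_bound. apply negset_nodup. intros v Hv. destruct (negset_in _ _ _ _ Hv) as [tau [_ [_ <-]]]. auto. }
  split. lia. split.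
  { intros HSl. destruct (negset c x n) as [|v l] eqn:E; auto.
    destruct (negset_in c x n v) as [tau [_ [Hxt _]]]. rewrite E; simpl; auto.
    rewrite Hx, HSl in Hxt. discriminate. }
  intros HD HSl. destruct Sl as [|j l] eqn:E; [congruence|].
  destruct (S_in_D D c x _ HS Hx j (S n)) as [_ HjD]. simpl; auto.
  destruct (pi_Dset D c x (S n)) eqn:E2; [inversion HjD|]. simpl. lia.
Qed.
End Zeta.

Lemma L2pos : / 2 < ln 2. Proof. exact ln_lt_2. Qed.
Lemma L2lt1 : ln 2 < 1.
Proof. rewrite <- (ln_exp 1). apply ln_increasing. lra. pose proof (exp_ineq1 1 ltac:(lra)). lra. Qed.

Lemma alpha_eq D : alpha D = exp (- (INR D / 2 ^ D * ln 2)).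
Proof. unfold alpha, Rpower. f_equal. unfold Rdiv. ring. Qed.

Lemma nat_lt_pow2 D : (D < 2 ^ D)%nat.
Proof. induction D; simpl; lia. Qed.

Lemma u_le1 D : INR D / 2 ^ D <= 1.
Proof. assert (0 < 2 ^ D) by (apply pow_lt; lra).
  assert (INR D <= 2 ^ D). { replace (2 ^ D) with (INR (2 ^ D)). apply le_INR. pose proof (nat_lt_pow2 D); lia.
   rewrite pow_INR. reflexivity. }
  apply Rmult_le_reg_r with (2 ^ D); auto. unfold Rdiv. rewrite Rmult_assoc, Rinv_l by lra. lra. Qed.

Lemma alpha_bounds D : (1 <= D)%nat -> 0 < alpha D < 1.
Proof. intros H. rewrite alpha_eq. split. apply exp_pos. rewrite <- exp_0. apply exp_increasing.
  assert (0 < INR D) by (apply lt_0_INR; lia). assert (0 < 2 ^ D) by (apply pow_lt; lra).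
  pose proof L2pos. assert (0 < INR D / 2 ^ D) by (apply Rdiv_lt_0_compat; auto).
  assert (0 < INR D / 2 ^ D * ln 2) by (apply Rmult_lt_0_compat; lra). lra. Qed.

Lemma ell1 : - ln (1 - alpha 1) <= 2 * ln 2.
Proof. set (a := alpha 1). assert (Ha : 0 < a < 1) by (apply alpha_bounds; lia).
  assert (Ha2 : a * a = / 2).
  { unfold a. rewrite alpha_eq. rewrite <- exp_plus.
    replace (-(INR 1 / 2 ^ 1 * ln 2) + -(INR 1 / 2^1 * ln 2)) with (- ln 2) by (simpl; field).
    rewrite exp_Ropp, exp_ln; lra. }
  assert (a <= 3/4) by nra.
  assert (ln (/ 4) <= ln (1 - a)) by (apply ln_le'; lra).
  rewrite ln_Rinv in H0 by lra. replace 4 with (2 * 2) in H0 by ring. rewrite ln_mult in H0 by lra. lra. Qed.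

Lemma ell2 D : (2 <= D)%nat -> - ln (1 - alpha D) <= (INR D + 1) * ln 2.
Proof. intros HD. set (u := INR D / 2 ^ D). set (L := ln 2).
  assert (HD' : 2 <= INR D) by (replace 2 with (INR 2) by (simpl; ring); apply le_INR; lia).
  assert (Hp : 0 < 2 ^ D) by (apply pow_lt; lra).
  assert (Hu : 0 < u) by (apply Rdiv_lt_0_compat; lra).
  assert (Hu1 : u <= 1) by apply u_le1.
  pose proof L2pos. pose proof L2lt1.
  set (y := u * L). assert (Hy : 0 < y < 1) by (unfold y, L in *; split; nra).
  assert (Hal : alpha D = / exp y) by (rewrite alpha_eq, exp_Ropp; reflexivity).
  pose proof (exp_ineq1 y ltac:(lra)) as He.
  assert (H1 : alpha D <= / (1 + y)) by (rewrite Hal; apply Rinv_le_contravar; lra).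
  assert (H2 : y / (1 + y) >= y / 2) by (apply Rle_ge; apply Rmult_le_compat_l; [lra| apply Rinv_le_contravar; lra]).
  assert (H3 : 1 - / (1 + y) = y / (1 + y)) by (field; lra).
  assert (Hlow : u / 4 <= 1 - alpha D) by (unfold y, L in *; nra).
  assert (ln (u / 4) <= ln (1 - alpha D)) by (apply ln_le'; lra).
  unfold u in H4. unfold Rdiv in H4. rewrite !ln_mult, !ln_Rinv, ln_pow in H4; try lra; try (apply Rinv_0_lt_compat; lra).
  replace 4 with (2 * 2) in H4 by ring. rewrite ln_mult in H4 by lra.
  assert (ln 2 <= ln (INR D)) by (apply ln_le'; lra). fold L in H4, H5 |- *. lra. apply Rmult_lt_0_compat; [lra| apply Rinv_0_lt_compat; lra]. Qed.

Lemma zeta_num D N M P : (1 <= D)%nat -> P >= alpha D ^ N * (1 - alpha D) ^ M ->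
  (N <= 2 ^ D)%nat -> (M <= D)%nat -> (D = 1%nat -> N = 0%nat \/ M = 0%nat) ->
  0 < P /\ - (ln P / ln 2) <= 2 * INR D ^ 2.
Proof. intros HD HP HN HM H1.
  destruct (alpha_bounds D HD) as [Ha0 Ha1].
  assert (HQ : 0 < alpha D ^ N * (1 - alpha D) ^ M) by (apply Rmult_lt_0_compat; apply pow_lt; lra).
  split. lra.
  assert (Hln : ln (alpha D ^ N * (1 - alpha D) ^ M) <= ln P) by (apply ln_le'; lra).
  rewrite ln_mult, !ln_pow in Hln by (try apply pow_lt; lra).
  assert (Hla : ln (alpha D) = - (INR D / 2^D * ln 2)) by (rewrite alpha_eq, ln_exp; auto).
  rewrite Hla in Hln. set (l := ln (1 - alpha D)) in *. set (u := INR D / 2 ^ D) in *. set (L := ln 2) in *.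
  assert (HL : / 2 < L) by apply L2pos.
  assert (Hl0 : l <= 0). { unfold l. rewrite <- ln_1. apply ln_le'; lra. }
  assert (Hp : 0 < 2 ^ D) by (apply pow_lt; lra).
  assert (HNu : INR N * u <= INR D).
  { assert (INR N <= 2 ^ D) by (replace (2 ^ D) with (INR (2 ^ D)) by (rewrite pow_INR; reflexivity); apply le_INR; auto).
    unfold u. unfold Rdiv. apply Rle_trans with (2 ^ D * (INR D * / 2 ^ D)).
    apply Rmult_le_compat_r; auto. apply Rmult_le_pos. apply pos_INR. left; apply Rinv_0_lt_compat; lra.
    right; field; lra. }
  assert (HMD : INR M <= INR D) by (apply le_INR; auto).
  assert (HM0 : 0 <= INR M) by apply pos_INR.
  assert (HN0 : 0 <= INR N) by apply pos_INR.
  assert (Hu0 : 0 <= u) by (unfold u; apply Rmult_le_pos; [apply pos_INR| left; apply Rinv_0_lt_compat; lra]).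
  assert (Goal : - ln P <= 2 * INR D ^ 2 * L).
  { destruct (Nat.eq_dec D 1) as [E|E].
    - assert (Hl : - l <= 2 * L) by (unfold l, L; subst D; apply ell1).
      rewrite E in *. simpl INR in *. destruct (H1 eq_refl) as [E1|E1]; subst.
      + simpl INR in *. nra.
      + simpl INR in *. unfold u in *. simpl in *. nra.
    - assert (Hl : - l <= (INR D + 1) * L) by (unfold l, L; apply ell2; lia).
      assert (HD2 : 2 <= INR D) by (replace 2 with (INR 2) by (simpl; ring); apply le_INR; lia).
      assert (A : INR N * u * L <= INR D * L) by (apply Rmult_le_compat_r; lra).
      assert (B : INR M * (- l) <= INR D * ((INR D + 1) * L)) by (apply Rmult_le_compat; lra).
      assert (C : 0 <= (INR D - 2) * INR D * L) by (apply Rmult_le_pos; [apply Rmult_le_pos|]; lra).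
      simpl pow. nra. }
  unfold Rdiv. replace (- (ln P * / L)) with ((- ln P) * / L) by ring.
  apply Rmult_le_reg_r with L. lra. rewrite Rmult_assoc, Rinv_l by lra. lra.
Qed.

Lemma INR_Dim k d : INR (Dim k d) = 2 ^ k * INR d ^ k.
Proof. unfold Dim. rewrite pow_INR, mult_INR, Rpow_mult_distr. reflexivity. Qed.

Lemma sq_eq k r : 2 * ((2 ^ k * r ^ k) ^ 2) = 2 ^ (2 * k + 1) * r ^ (2 * k).
Proof. rewrite <- Rpow_mult_distr, <- pow_mult. replace (2 * k)%nat with (k * 2)%nat by lia.
  rewrite pow_add, Rpow_mult_distr. simpl (2 ^ 1). ring. Qed.

Theorem corollary6 (n k d : nat) (a : nat -> assignment) (hstar : list (list literal)) :
  is_kCNF k d hstar ->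
  let x := fun t => eval_cnf hstar (a t) in
  (0 < seq_prob (Alg1_prob k d a x) n /\
   logloss (Alg1_prob k d a x) n <= 2 ^ (2 * k + 1) * INR d ^ (2 * k)) /\
  (0 < seq_prob (Alg2_prob k d a x) n /\
   logloss (Alg2_prob k d a x) n <= (2 ^ k * INR d ^ k + 1) * log2 (INR n + 1)).
Proof.
  intros Hk x. destruct (S_exists k d hstar Hk) as [Sl [HS HSx]].
  set (D := Dim k d) in *. set (c := fun s => phi k d (a s)).
  assert (Hx : forall t, x t = forallb (fun j => Defs.comp (c t) j) Sl) by (intros t; apply HSx).
  assert (Hc : forall t, length (c t) = D) by (intros t; apply length_phi).
  split.
  - change (Alg1_prob k d a x) with (zeta_prob D c x).
    destruct (Nat.eq_dec D 0) as [E|E].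
    + assert (Hal : 0 < alpha D <= 1). { rewrite E, alpha_eq. simpl. 
        replace (- (0 / 1 * ln 2)) with 0 by field. rewrite exp_0; lra. }
      destruct (zeta_final D c x Sl HS Hx Hal ltac:(lia) n Hc) as [H1 [H2 [H3 [H4 H5]]]].
      assert (HSl : Sl = []). { destruct Sl as [|j l]; auto. specialize (HS j (or_introl eq_refl)). lia. }
      rewrite (H4 HSl) in H1. replace (D - length (pi_Dset D c x (S n)))%nat with 0%nat in H1 by lia.
      simpl in H1. assert (HP : seq_prob (zeta_prob D c x) n >= 1) by lra.
      split. lra. unfold logloss, log2.
      assert (0 <= ln (seq_prob (zeta_prob D c x) n)) by (rewrite <- ln_1; apply ln_le'; lra).
      assert (0 < ln 2) by (pose proof ln_lt_2; lra).
      assert (0 <= ln (seq_prob (zeta_prob D c x) n) / ln 2) by (unfold Rdiv; apply Rmult_le_pos; [lra| left; apply Rinv_0_lt_compat; lra]).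
      assert (0 <= 2 ^ (2 * k + 1) * INR d ^ (2 * k)) by (apply Rmult_le_pos; apply pow_le; [lra|apply pos_INR]).
      lra.
    + pose proof (alpha_bounds D ltac:(lia)) as Hab.
      destruct (zeta_final D c x Sl HS Hx ltac:(lra) (fun _ => proj2 Hab) n Hc) as [H1 [H2 [H3 [H4 H5]]]].
      destruct (zeta_num D _ _ _ ltac:(lia) H1 H2 H3) as [Z1 Z2].
      { intros HD. destruct Sl as [|j l]. left; auto. right; apply H5; auto; discriminate. }
      split; auto. unfold logloss, log2. rewrite <- sq_eq, <- INR_Dim. fold D. lra.
  - change (Alg2_prob k d a x) with (pi_prob D c x).
    rewrite <- INR_Dim. fold D. apply (pi_final D c x Sl HS Hx n).
Qed.
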